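(* Let $\rho_\lambda$ satisfy Condition (R), let $m\ge1$, $A\subset[m]$ and $\xi>0$. Then $$\mathcal{C}^m_\rho(A,\xi)\subset\bigcup_{A'\subset[m],\ |A'|=|A|}\mathcal{C}^m_1(A',\xi).$$
   Context: $\rho_\lambda(u)=\sum_i\rho_\lambda(|u_i|)$ for $u\in\mathbb{R}^m$; $u_A$ denotes $u$ restricted to the coordinates in $A$. $\mathcal{C}^m_\rho(A,\xi)=\{u\in\mathbb{R}^m:\rho_\lambda(u_{A^c})\le\xi\rho_\lambda(u_A)\}$ and $\mathcal{C}^m_1(A,\xi)=\{u\in\mathbb{R}^m:\|u_{A^c}\|_1\le\xi\|u_A\|_1\}$. Condition (R): $\rho_\lambda:[0,\infty)\to[0,\infty)$ is concave, nondecreasing, right-differentiable at $0$, $\rho_\lambda(0)=0$, $0<\rho_\lambda'(0^+)<\infty$, and there are constants $a,b\ge0$ independent of $\lambda$ with $\rho_\lambda(x)\ge\min\{a\lambda x,b\lambda^2\}$. *)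

(* Defs.v *)
From HB Require Import structures.
From mathcomp Require Import all_boot all_order all_algebra.
From mathcomp Require Import all_classical all_reals all_analysis.
Set Implicit Arguments. Unset Strict Implicit. Unset Printing Implicit Defensive.
Import Order.TTheory GRing.Theory Num.Theory.
Import numFieldNormedType.Exports.
Local Open Scope classical_set_scope.
Local Open Scope ring_scope.

(* Condition (R) for a penalty rho_lambda : [0,oo) -> [0,oo), modelled as a
   function R -> R whose properties are only required on [0,oo). *)
Definition condR (R : realType) (lambda : R) (rho : R -> R) : Prop :=
  (forall x, 0 <= x -> 0 <= rho x) /\
  (forall x y t, 0 <= x -> 0 <= y -> 0 <= t -> t <= 1 ->
      t * rho x + (1 - t) * rho y <= rho (t * x + (1 - t) * y)) /\
  (forall x y, 0 <= x -> x <= y -> rho x <= rho y) /\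
  rho 0 = 0 /\
  (exists d : R, 0 < d /\
      (fun h => (rho h - rho 0) / h) @ at_right (0 : R) --> d) /\
  (exists a b : R, 0 <= a /\ 0 <= b /\
      forall x, 0 <= x -> Num.min (a * lambda * x) (b * lambda ^+ 2) <= rho x).

Definition rho_sum (R : realType) (m : nat) (rho : R -> R)
    (S : {set 'I_m}) (u : 'rV[R]_m) : R :=
  \sum_(i in S) rho `|u ord0 i|.

Definition l1_sum (R : realType) (m : nat) (S : {set 'I_m}) (u : 'rV[R]_m) : R :=
  \sum_(i in S) `|u ord0 i|.

Definition cone_rho (R : realType) (m : nat) (rho : R -> R)
    (A : {set 'I_m}) (xi : R) : set 'rV[R]_m :=
  [set u | rho_sum rho (~: A) u <= xi * rho_sum rho A u].

Definition cone_l1 (R : realType) (m : nat)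
    (A : {set 'I_m}) (xi : R) : set 'rV[R]_m :=
  [set u | l1_sum (~: A) u <= xi * l1_sum A u].

(* Main.v *)
Require Import Defs.
From HB Require Import structures.
From mathcomp Require Import all_boot all_order all_algebra.
From mathcomp Require Import all_classical all_reals all_analysis.
Import Order.TTheory GRing.Theory Num.Theory.
Local Open Scope classical_set_scope.
Local Open Scope ring_scope.

Lemma rho_pos (R : realType) (lambda : R) (rho : R -> R) (t : R) :
  condR lambda rho -> 0 < t -> 0 < rho t.
Proof.
case=> [Hnn [Hcc [Hmono [H0 [[d [d0 Hd]] _]]]]] t0.
rewrite lt_def Hnn ?ltW // andbT; apply/negP => /eqP Ht0.
have d2 : d / 2 < d by rewrite ltr_pdivrMr // ltr_pMr // ltr1n.
have H1 : \forall h \near (0:R)^'+, d / 2 < (rho h - rho 0) / h.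
  exact: (cvgr_gt _ Hd _ d2).
have H2 := @nbhs_right_gt R 0.
have H3 := nbhs_right_lt t0.
have := filter_ex (filterI (filterI H1 H2) H3).
have PF : ProperFilter (nbhs (0:R)^'+) by apply: at_right_proper_filter.
 move=> /(_ PF PF PF) [h [[Hh1 Hh2] Hh3]].
have rh : rho h = 0.
  apply/le_anti/andP; split; last exact: Hnn (ltW Hh2).
  by rewrite -Ht0; apply: Hmono; apply: ltW.
move: Hh1; rewrite rh H0 subrr mul0r => H.
have d2p : 0 < d / 2 by rewrite divr_gt0.
by have := lt_trans d2p H; rewrite ltxx.
Qed.

Lemma rho_F1 (R : realType) (lambda : R) (rho : R -> R) (x t : R) :
  condR lambda rho -> 0 <= x -> x <= t -> 0 < t -> x * rho t <= t * rho x.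
Proof.
case=> [Hnn [Hcc [Hmono [H0 _]]]] x0 xt t0.
have := Hcc t 0 (x / t) (ltW t0) (lexx 0) (divr_ge0 x0 (ltW t0)).
rewrite ler_pdivrMr // mul1r H0 mulr0 !addr0 => /(_ xt).
rewrite divfK ?gt_eqF // => H.
apply: le_trans (ler_wpM2l (ltW t0) H).
by rewrite mulrA [t * _]mulrC divfK ?gt_eqF.
Qed.

Lemma rho_F2 (R : realType) (lambda : R) (rho : R -> R) (x t : R) :
  condR lambda rho -> 0 < t -> t <= x -> t * rho x <= x * rho t.
Proof.
case=> [Hnn [Hcc [Hmono [H0 _]]]] t0 tx.
have x0 : 0 < x by apply: lt_le_trans tx.
have := Hcc x 0 (t / x) (ltW x0) (lexx 0) (divr_ge0 (ltW t0) (ltW x0)).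
rewrite ler_pdivrMr // mul1r H0 mulr0 !addr0 => /(_ tx).
rewrite divfK ?gt_eqF // => H.
apply: le_trans (ler_wpM2l (ltW x0) H).
by rewrite mulrA [x * _]mulrC divfK ?gt_eqF.
Qed.

Theorem lemma12 (R : realType) (lambda : R) (rho : R -> R) (m : nat)
    (A : {set 'I_m}) (xi : R) :
  condR lambda rho -> (0 < m)%N -> 0 < xi ->
  cone_rho rho A xi `<=`
    \bigcup_(A' in [set A' : {set 'I_m} | #|A'| = #|A|]) cone_l1 A' xi.
Proof.
move=> HR m0 xi0 u Hu.
have Hmono : forall x y, 0 <= x -> x <= y -> rho x <= rho y.
  by case: HR => [_ [_ [H _]]].
rewrite /cone_rho /= in Hu.
have [A' /eqP cA' Amax] : exists2 A' : {set 'I_m}, #|A'| == #|A| &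
    forall S : {set 'I_m}, #|S| == #|A| -> l1_sum S u <= l1_sum A' u.
  case: (@arg_maxP _ _ _ A (fun S : {set 'I_m} => #|S| == #|A|) (fun S : {set 'I_m} => l1_sum S u) (eqxx _)).
  by move=> S PS H; exists S.
have swap : forall i j, i \in A' -> j \notin A' -> `|u ord0 j| <= `|u ord0 i|.
  move=> i j iA jA.
  have jA1 : j \notin A' :\ i by rewrite !inE negb_and jA orbT.
  have cS : #|j |: (A' :\ i)| == #|A|.
    by rewrite cardsU1 jA1 -cA' (cardsD1 i A') iA.
  move/(_ _ cS): Amax.
  by rewrite /l1_sum big_setU1 //= (big_setD1 _ iA) /= lerD2r.
have [t [t0 [tout tin]]] : exists t, 0 <= t /\
    (forall j, j \notin A' -> `|u ord0 j| <= t) /\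
    (forall i, i \in A' -> t <= `|u ord0 i|).
  case: (pickP (fun i => i \in A')) => [i0 i0A | A'0].
    case: (@arg_minP _ _ _ i0 (fun i => i \in A') (fun i => `|u ord0 i|) i0A).
    move=> i1 i1A Hmin.
    exists `|u ord0 i1|; split => //; split => [j jA|i iA]; first exact: swap.
    exact: Hmin.
  exists (\sum_i `|u ord0 i|); split; first exact: sumr_ge0.
  split => [j _|i]; last by rewrite A'0.
  by rewrite (bigD1 j) //= lerDl sumr_ge0.
exists A'; first by [].
rewrite /cone_l1 /=.
rewrite le_eqVlt in t0; case/orP: t0 => [/eqP t_0 | tpos].
  have -> : l1_sum (~: A') u = 0.
    rewrite /l1_sum big1 // => j; rewrite inE => jA.
    apply/le_anti/andP; split; last exact: normr_ge0.
    by rewrite t_0; exact: tout.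
  by apply: mulr_ge0 (ltW xi0) (sumr_ge0 _ _).
set B := A :\: A'. set C := A' :\: A.
have cBC : #|B| = #|C|.
  have h1 := cardsID A' A; have h2 := cardsID A A'.
  rewrite finset.setIC cA' in h2; rewrite -h2 in h1; exact: addnI h1.
have hB : rho_sum rho B u <= #|B|%:R * rho t.
  have -> : #|B|%:R * rho t = \sum_(i in B) rho t by rewrite sumr_const mulr_natl.
  apply: ler_sum => j; rewrite !inE => /andP [jA' _]; apply: Hmono => //.
  exact: tout.
have hC : #|C|%:R * rho t <= rho_sum rho C u.
  have -> : #|C|%:R * rho t = \sum_(i in C) rho t by rewrite sumr_const mulr_natl.
  apply: ler_sum => j; rewrite !inE => /andP [_ jA']; apply: Hmono; [exact: ltW | exact: tin].
have hBC : rho_sum rho B u <= rho_sum rho C u.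
  by apply: le_trans hB _; rewrite cBC.
have E3 : rho_sum rho A u <= rho_sum rho A' u.
  rewrite /rho_sum (big_setID A') (big_setID (A := A') A) finset.setIC lerD2l.
  exact: hBC.
have E2 : rho_sum rho (~: A') u <= rho_sum rho (~: A) u.
  rewrite /rho_sum (big_setID (~: A)) (big_setID (A := ~: A) (~: A')) finset.setIC lerD2l.
  have -> : ~: A' :\: ~: A = B by apply/setP => x; rewrite !inE negbK andbC.
  have -> : ~: A :\: ~: A' = C by apply/setP => x; rewrite !inE negbK andbC.
  exact: hBC.
have rt := @rho_pos _ _ _ _ HR tpos.
have E1 : rho t * l1_sum (~: A') u <= t * rho_sum rho (~: A') u.
  rewrite /l1_sum /rho_sum !mulr_sumr; apply: ler_sum => j; rewrite inE => jA.
  rewrite mulrC; exact: (@rho_F1 _ _ _ _ _ HR (normr_ge0 _) (tout _ jA) tpos).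
have E4 : t * rho_sum rho A' u <= rho t * l1_sum A' u.
  rewrite /l1_sum /rho_sum !mulr_sumr; apply: ler_sum => j jA.
  rewrite [X in _ <= X]mulrC; exact: (@rho_F2 _ _ _ _ _ HR tpos (tin _ jA)).
rewrite -(ler_pM2l rt).
apply: (le_trans E1); apply: le_trans (ler_wpM2l (ltW tpos) (le_trans E2 Hu)) _.
rewrite mulrCA [rho t * _]mulrCA.

rewrite ler_pM2l //; exact: le_trans (ler_wpM2l (ltW tpos) E3) E4.
Qed.
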